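(* The two-dimensional subalgebras of ${\rm A}_4$ are exactly $\langle e_1,e_2\rangle$, $\langle e_1\pm\mathrm{i}e_3,e_2\rangle$, $\langle e_1-e_2,e_3\rangle$ and $\langle e_1,\pm\mathrm{i}e_2+e_3\rangle$. Up to automorphisms of ${\rm A}_4$, every two-dimensional subalgebra is equivalent to one of $\langle e_1,e_2\rangle$, $\langle e_1+\mathrm{i}e_3,e_2\rangle$, $\langle e_1-e_2,e_3\rangle$, $\langle e_1,\mathrm{i}e_2+e_3\rangle$.
   Context: ${\rm A}_4$ is the complex algebra with basis $e_1,e_2,e_3$, unit $e_1$ ($e_1e_i=e_ie_1=e_i$), $e_2e_2=e_2$ and $e_3e_3=-e_1+e_2$; all other products of basis elements are zero. $\mathrm{i}=\sqrt{-1}$. A subalgebra is a linear subspace closed under multiplication (it need not contain $e_1$). Equivalence up to automorphisms means one is mapped onto the other by an algebra automorphism. $\langle S\rangle$ denotes linear span. *)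

(* Defs.v *)
(* The algebra A_4 over an algebraically closed numeric field C
   (containing 'i with 'i^2 = -1); C = complex numbers is an instance. *)
From HB Require Import structures.
From mathcomp Require Import all_boot all_order all_algebra.
Set Implicit Arguments. Unset Strict Implicit. Unset Printing Implicit Defensive.
Import Order.TTheory GRing.Theory Num.Theory.
Local Open Scope ring_scope.

Section A4.
Variable C : numClosedFieldType.

Definition A4e (i : 'I_3) : 'rV[C]_3 := delta_mx 0 i.
Definition A4e1 : 'rV[C]_3 := A4e 0.
Definition A4e2 : 'rV[C]_3 := A4e 1.
Definition A4e3 : 'rV[C]_3 := A4e 2.

Definition A4tbl (i j : 'I_3) : 'rV[C]_3 :=
  match nat_of_ord i, nat_of_ord j with
  | 0%N, _ => A4e j
  | _, 0%N => A4e i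
  | 1%N, 1%N => A4e2
  | 2%N, 2%N => - A4e1 + A4e2
  | _, _ => 0
  end.

Definition A4mul (x y : 'rV[C]_3) : 'rV[C]_3 :=
  \sum_(i < 3) \sum_(j < 3) (x 0 i * y 0 j) *: A4tbl i j.

Definition A4subalg (U : {vspace 'rV[C]_3}) : Prop :=
  forall x y, x \in U -> y \in U -> A4mul x y \in U.

Definition A4aut (f : 'rV[C]_3 -> 'rV[C]_3) : Prop :=
  [/\ linear f, bijective f & forall x y, f (A4mul x y) = A4mul (f x) (f y)].

Definition A4equiv (U V : {vspace 'rV[C]_3}) : Prop :=
  exists f, A4aut f /\ (forall v, v \in V <-> exists2 u, u \in U & f u = v).

End A4.

(* Main.v *)
Require Import Defs.
From HB Require Import structures.
From mathcomp Require Import all_boot all_order all_algebra.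
From mathcomp Require Import ring zify.
Import Order.TTheory GRing.Theory Num.Theory.
Local Open Scope ring_scope.
Set Implicit Arguments. Unset Strict Implicit. Unset Printing Implicit Defensive.

Section Sec1.
Variable C : numClosedFieldType.
Local Notation V := 'rV[C]_3.

Definition i0 : 'I_3 := @Ordinal 3 0 isT.
Definition i1 : 'I_3 := @Ordinal 3 1 isT.
Definition i2 : 'I_3 := @Ordinal 3 2 isT.

Definition vec (a b c : C) : V := \row_(j < 3) nth 0 [:: a; b; c] j.

Lemma vecE (x : V) : x = vec (x 0 i0) (x 0 i1) (x 0 i2).
Proof.
apply/rowP => j; rewrite mxE; case: j => [[|[|[|//]]] hj] /=;
  congr (x 0 _); exact: val_inj.
Qed.

Lemma vec_inj a b c d e f : vec a b c = vec d e f -> [/\ a = d, b = e & c = f].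
Proof.
move=> h; split.
- by have := congr1 (fun v : V => v 0 i0) h; rewrite !mxE.
- by have := congr1 (fun v : V => v 0 i1) h; rewrite !mxE.
- by have := congr1 (fun v : V => v 0 i2) h; rewrite !mxE.
Qed.

Lemma vecD a b c d e f : vec a b c + vec d e f = vec (a+d) (b+e) (c+f).
Proof. by apply/rowP => j; rewrite !mxE; case: j => [[|[|[|//]]] hj]. Qed.

Lemma vecZ k a b c : k *: vec a b c = vec (k*a) (k*b) (k*c).
Proof. by apply/rowP => j; rewrite !mxE; case: j => [[|[|[|//]]] hj]. Qed.

Lemma vecN a b c : - vec a b c = vec (-a) (-b) (-c).
Proof. by apply/rowP => j; rewrite !mxE; case: j => [[|[|[|//]]] hj]. Qed.

Lemma vec0 : (0 : V) = vec 0 0 0.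
Proof. by apply/rowP => j; rewrite !mxE; case: j => [[|[|[|//]]] hj]. Qed.

Lemma A4eE (i : 'I_3) : A4e C i = vec (i == i0)%:R (i == i1)%:R (i == i2)%:R.
Proof.
apply/rowP => j; rewrite !mxE; case: j => [[|[|[|//]]] hj] /=;
  case: i => [[|[|[|//]]] hi] //=.
Qed.

Lemma e1E : A4e1 C = vec 1 0 0. Proof. by rewrite /A4e1 A4eE. Qed.
Lemma e2E : A4e2 C = vec 0 1 0. Proof. by rewrite /A4e2 A4eE. Qed.
Lemma e3E : A4e3 C = vec 0 0 1. Proof. by rewrite /A4e3 A4eE. Qed.

Lemma A4mulE a b c d e f : A4mul (vec a b c) (vec d e f) =
  vec (a*d - c*f) (a*e + b*d + b*e + c*f) (a*f + c*d).
Proof.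
rewrite /A4mul !big_ord_recr !big_ord0 /= !add0r.
rewrite /A4tbl /= /A4e1 /A4e2 !A4eE !mxE /= !vecZ !vecD vecN vecD vec0 !vecZ !vecD.
by congr vec; ring.
Qed.
End Sec1.

Section Sec2.
Variable C : numClosedFieldType.
Local Notation V := 'rV[C]_3.
Definition dot (x n : V) := x 0 i0 * n 0 i0 + x 0 i1 * n 0 i1 + x 0 i2 * n 0 i2.
Definition Kf (n : V) : 'Hom(V, 'M[C]_1) := linfun (mulmxr n^T).
Definition Kn (n : V) : {vspace V} := lker (Kf n).
Lemma sum3 (F : 'I_3 -> C) : \sum_(j < 3) F j = F i0 + F i1 + F i2.
Proof.
rewrite !big_ord_recr big_ord0 /= add0r.
by congr (F _ + F _ + F _); apply: val_inj.
Qed.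
Lemma memK n x : (x \in Kn n) = (dot x n == 0).
Proof.
rewrite memv_ker /Kf lfunE /= /mulmxr.
have -> : (x *m n^T == 0) = ((x *m n^T) 0 0 == 0).
  apply/eqP/eqP => [->|h]; first by rewrite mxE.
  by apply/matrixP => i j; rewrite !ord1 h mxE.
by rewrite mxE sum3 !mxE.
Qed.

Lemma dimK (n : V) : n != 0 -> \dim (Kn n) = 2%N.
Proof.
move=> nz.
have H := limg_ker_dim (Kf n) fullv.
rewrite capfv dimvf /= dim_matrix in H.
have him : (\dim (Kf n @: fullv) <= 1)%N.
  by have := dimvS (subvf (Kf n @: fullv)); rewrite dimvf /= dim_matrix.
have hlt : (\dim (Kn n) < 3)%N.
  rewrite ltnNge; apply/negP => h3.
  have /eqP hf : Kn n == fullv by rewrite eqEdim subvf dimvf /= dim_matrix.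
  move: nz; rewrite (vecE n) vec0.
  have : vec 1 0 0 \in Kn n by rewrite hf memvf.
  rewrite memK /dot !mxE /= => /eqP.
  have : vec 0 1 0 \in Kn n by rewrite hf memvf.
  rewrite memK /dot !mxE /= => /eqP.
  have : vec 0 0 1 \in Kn n by rewrite hf memvf.
  rewrite memK /dot !mxE /= => /eqP.
  rewrite !mul0r !mul1r !add0r !addr0 => -> -> ->.
  by rewrite eqxx.
move: H him hlt; rewrite /Kn; set a := \dim (lker _); set b := \dim (limg _); move=> H1 H2 H3.
have e : (a + b = 3)%N by exact: H1.
lia.
Qed.

Lemma K_eq (U : {vspace V}) n : \dim U = 2%N -> n != 0 -> (U <= Kn n)%VS -> U = Kn n.
Proof.
move=> dU nz sU; apply/eqP; by rewrite eqEdim sU dU dimK.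
Qed.

Lemma div_help (a b c d : C) : d != 0 -> a * d = b * c -> a = b / d * c.
Proof. by move=> hd h; rewrite mulrAC -h mulfK. Qed.

Lemma normal_exists (U : {vspace V}) : \dim U = 2%N -> exists n, n != 0 /\ U = Kn n.
Proof.
move=> dU.
have [X [hb hs]] : exists X : seq V, basis_of U X /\ size X = 2%N.
  by exists (vbasis U); split; [exact: vbasisP | rewrite size_tuple dU].
case: X hb hs => [|u [|v [|]]] // hb _.
move/andP: hb => [/eqP hU hfree].
rewrite free_cons seq1_free span_seq1 in hfree; case/andP: hfree => hu hv.
pose n := vec (u 0 i1 * v 0 i2 - u 0 i2 * v 0 i1) (u 0 i2 * v 0 i0 - u 0 i0 * v 0 i2)
              (u 0 i0 * v 0 i1 - u 0 i1 * v 0 i0).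
have nz : n != 0.
  apply/negP => /eqP hn; rewrite vec0 in hn; case: (vec_inj hn) => h1 h2 h3.
  move/negP: hu; apply; apply/vlineP.
  have [v0|v0] := eqVneq (v 0 i0) 0.
    have [v1|v1] := eqVneq (v 0 i1) 0.
      have [v2|v2] := eqVneq (v 0 i2) 0.
        by move: hv; rewrite (vecE v) v0 v1 v2 -vec0 eqxx.
      exists (u 0 i2 / v 0 i2); rewrite [LHS]vecE [X in _ *: X]vecE vecZ; congr vec.
      - by apply: div_help => //; move/eqP: h2; rewrite subr_eq0 => /eqP.
      - by apply: div_help => //; move/eqP: h1; rewrite subr_eq0 => /eqP ->; ring.
      - by rewrite divfK.
    exists (u 0 i1 / v 0 i1); rewrite [LHS]vecE [X in _ *: X]vecE vecZ; congr vec.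
    - by apply: div_help => //; move/eqP: h3; rewrite subr_eq0 => /eqP ->; ring.
    - by rewrite divfK.
    - by apply: div_help => //; move/eqP: h1; rewrite subr_eq0 => /eqP.
  exists (u 0 i0 / v 0 i0); rewrite [LHS]vecE [X in _ *: X]vecE vecZ; congr vec.
  - by rewrite divfK.
  - by apply: div_help => //; move/eqP: h3; rewrite subr_eq0 => /eqP.
  - by apply: div_help => //; move/eqP: h2; rewrite subr_eq0 => /eqP ->; ring.
exists n; split => //.
apply: K_eq => //; rewrite -hU; apply/span_subvP => w.
by rewrite !inE => /orP [] /eqP ->; rewrite memK /dot /n !mxE /=; apply/eqP; ring.
Qed.
End Sec2.

Section Sec3.
Variable C : numClosedFieldType.
Local Notation V := 'rV[C]_3.

Lemma vec_neq0 (a b c : C) : [|| a != 0, b != 0 | c != 0] -> vec a b c != 0.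
Proof.
move=> h; apply/eqP; rewrite vec0 => /vec_inj [ha hb hc].
by move: h; rewrite ha hb hc eqxx.
Qed.

Lemma span2K (a b n : V) : a 0 i0 != 0 -> b 0 i0 = 0 -> b != 0 -> n != 0 ->
  dot a n = 0 -> dot b n = 0 -> span [:: a; b] = Kn n.
Proof.
move=> a0 b0 bn nn da db; apply: K_eq => //.
  apply/eqP; rewrite -[2%N]/(size [:: a; b]); rewrite -/(free _).
  rewrite free_cons seq1_free bn span_seq1 andbT; apply/vlineP => -[k hk].
  by move: a0; rewrite hk mxE b0 mulr0 eqxx.
apply/span_subvP => w; rewrite !inE => /orP [] /eqP ->; rewrite memK; exact/eqP.
Qed.

Ltac simp := rewrite /dot ?e1E ?e2E ?e3E ?vecZ ?vecN ?vecD ?vecN ?mxE /=.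
Ltac solv := simp; first [ by ring: (sqrCi C) | by apply: vec_neq0; rewrite ?(mulr0, subr0, addr0, oppr0, sub0r, add0r, mul0r, mulr1, oppr_eq0, oner_eq0, neq0Ci, orbT) | by rewrite ?oner_eq0 | by rewrite ?(mulr0, subr0, addr0, oppr0, sub0r, add0r, mul0r, mulr1, oner_eq0) | idtac].

Lemma S1E : span [:: A4e1 C; A4e2 C] = Kn (vec 0 0 1).
Proof. by apply: span2K; solv. Qed.
Lemma S2E : span [:: A4e1 C + 'i *: A4e3 C; A4e2 C] = Kn (vec 1 0 'i).
Proof. by apply: span2K; solv. Qed.
Lemma S3E : span [:: A4e1 C - 'i *: A4e3 C; A4e2 C] = Kn (vec 1 0 (-'i)).
Proof. by apply: span2K; solv. Qed.
Lemma S4E : span [:: A4e1 C - A4e2 C; A4e3 C] = Kn (vec 1 1 0).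
Proof. by apply: span2K; solv. Qed.
Lemma S5E : span [:: A4e1 C; 'i *: A4e2 C + A4e3 C] = Kn (vec 0 1 (-'i)).
Proof. by apply: span2K; solv. Qed.
Lemma S6E : span [:: A4e1 C; - 'i *: A4e2 C + A4e3 C] = Kn (vec 0 1 'i).
Proof. by apply: span2K; solv. Qed.
End Sec3.

Section Sec4.
Variable C : numClosedFieldType.
Local Notation V := 'rV[C]_3.

Lemma subalgK (n : V) : (forall a b c d e f, dot (vec a b c) n = 0 -> dot (vec d e f) n = 0 ->
   dot (A4mul (vec a b c) (vec d e f)) n = 0) -> A4subalg (Kn n).
Proof.
move=> h x y; rewrite !memK (vecE x) (vecE y) => /eqP hx /eqP hy; apply/eqP; exact: h.
Qed.

Ltac simp := rewrite /dot ?A4mulE ?vecZ ?vecN ?vecD ?vecN ?mxE /=.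

Lemma sub1 : A4subalg (Kn (vec 0 0 1 : V)).
Proof.
apply: subalgK => a b c d e f; simp => hx hy.
have h1 : c = 0 by rewrite -hx; ring.
have h2 : f = 0 by rewrite -hy; ring.
subst c f; ring: (sqrCi C).
Qed.
Lemma sub2 : A4subalg (Kn (vec 1 0 'i : V)).
Proof.
apply: subalgK => a b c d e f; simp => hx hy.
have h1 : a = - (c * 'i) by apply/eqP; rewrite -subr_eq0 -hx; apply/eqP; ring.
have h2 : d = - (f * 'i) by apply/eqP; rewrite -subr_eq0 -hy; apply/eqP; ring.
subst a d; ring: (sqrCi C).
Qed.
Lemma sub3 : A4subalg (Kn (vec 1 0 (-'i) : V)).
Proof.
apply: subalgK => a b c d e f; simp => hx hy.
have h1 : a = c * 'i by apply/eqP; rewrite -subr_eq0 -hx; apply/eqP; ring.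
have h2 : d = f * 'i by apply/eqP; rewrite -subr_eq0 -hy; apply/eqP; ring.
subst a d; ring: (sqrCi C).
Qed.
Lemma sub4 : A4subalg (Kn (vec 1 1 0 : V)).
Proof.
apply: subalgK => a b c d e f; simp => hx hy.
have h1 : a = - b by apply/eqP; rewrite -subr_eq0 -hx; apply/eqP; ring.
have h2 : d = - e by apply/eqP; rewrite -subr_eq0 -hy; apply/eqP; ring.
subst a d; ring: (sqrCi C).
Qed.
Lemma sub5 : A4subalg (Kn (vec 0 1 (-'i) : V)).
Proof.
apply: subalgK => a b c d e f; simp => hx hy.
have h1 : b = c * 'i by apply/eqP; rewrite -subr_eq0 -hx; apply/eqP; ring.
have h2 : e = f * 'i by apply/eqP; rewrite -subr_eq0 -hy; apply/eqP; ring.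
subst b e; ring: (sqrCi C).
Qed.
Lemma sub6 : A4subalg (Kn (vec 0 1 'i : V)).
Proof.
apply: subalgK => a b c d e f; simp => hx hy.
have h1 : b = - (c * 'i) by apply/eqP; rewrite -subr_eq0 -hx; apply/eqP; ring.
have h2 : e = - (f * 'i) by apply/eqP; rewrite -subr_eq0 -hy; apply/eqP; ring.
subst b e; ring: (sqrCi C).
Qed.
End Sec4.

Section Sec5.
Variable C : numClosedFieldType.
Local Notation V := 'rV[C]_3.

Definition in2 (a b n : V) := dot a n = 0 /\ dot b n = 0.
Definition mulclosed (n : V) := forall x y : V, dot x n = 0 -> dot y n = 0 -> dot (A4mul x y) n = 0.

Ltac simp := rewrite /in2 /dot ?e1E ?e2E ?e3E ?A4mulE ?vecZ ?vecN ?vecD ?vecN ?mxE /=.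

Lemma two_neq0 : (2 : C) != 0. Proof. by rewrite pnatr_eq0. Qed.

Lemma classify' (p q r : C) :
  let n := vec ((q + r) / 2 + p) p (- 'i * (q - r) / 2) in mulclosed n ->
  in2 (A4e1 C) (A4e2 C) n \/ in2 (A4e1 C + 'i *: A4e3 C) (A4e2 C) n \/
  in2 (A4e1 C - 'i *: A4e3 C) (A4e2 C) n \/ in2 (A4e1 C - A4e2 C) (A4e3 C) n \/
  in2 (A4e1 C) ('i *: A4e2 C + A4e3 C) n \/ in2 (A4e1 C) (- 'i *: A4e2 C + A4e3 C) n.
Proof.
move=> n h.
have h2 := two_neq0.
have t1 : p * q * (q + 2 * p) = 0.
  have hx : dot (vec (-p) (q+p) (-p*'i)) n = 0 by simp; field: (sqrCi C).
  have := h _ _ hx hx; simp => H; rewrite -[RHS]H; by field: (sqrCi C).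
have t2 : p * r * (r + 2 * p) = 0.
  have hx : dot (vec (-p) (r+p) (p*'i)) n = 0 by simp; field: (sqrCi C).
  have := h _ _ hx hx; simp => H; rewrite -[RHS]H; by field: (sqrCi C).
have t3 : 2 * q * r * (q + r) = 0.
  have hx : dot (vec (r-q) (q-r) ('i*(r+q))) n = 0 by simp; field: (sqrCi C).
  have := h _ _ hx hx; simp => H; rewrite -[RHS]H; by field: (sqrCi C).
clear h; rewrite /n; clear n.
have [p0|p0] := eqVneq p 0.
  subst p.
  have [q0|q0] := eqVneq q 0.
    subst q; right; left; split; simp; by field: (sqrCi C).
  have [r0|r0] := eqVneq r 0.
    subst r; right; right; left; split; simp; by field: (sqrCi C).
  have qr : q = - r.
    by move/eqP: t3; rewrite !mulf_eq0 (negbTE h2) (negbTE q0) (negbTE r0) /= addr_eq0 => /eqP.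
  subst q; left; split; simp; by field: (sqrCi C).
have [q0|q0] := eqVneq q 0.
  have [r0|r0] := eqVneq r 0.
    subst q r; do 3 right; left; split; simp; by field: (sqrCi C).
  have rp : r = - (2 * p).
    by move/eqP: t2; rewrite !mulf_eq0 (negbTE p0) (negbTE r0) /= addr_eq0 => /eqP.
  subst q r; do 4 right; left; split; simp; by field: (sqrCi C).
have qp : q = - (2 * p).
  by move/eqP: t1; rewrite !mulf_eq0 (negbTE p0) (negbTE q0) /= addr_eq0 => /eqP.
have [r0|r0] := eqVneq r 0.
  subst q r; do 5 right; split; simp; by field: (sqrCi C).
exfalso.
have rp : r = - (2 * p).
  by move/eqP: t2; rewrite !mulf_eq0 (negbTE p0) (negbTE r0) /= addr_eq0 => /eqP.
subst q r; move/eqP: t3.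
rewrite (_ : 2 * - (2 * p) * - (2 * p) * (- (2 * p) + - (2 * p)) = - (2 * 2 * 2 * 2 * 2) * (p * p * p)); last by ring.
by rewrite !mulf_eq0 oppr_eq0 !mulf_eq0 (negbTE h2) (negbTE p0).
Qed.
End Sec5.

Section Sec6.
Variable C : numClosedFieldType.
Local Notation V := 'rV[C]_3.

Lemma classify (n : V) : mulclosed n ->
  in2 (A4e1 C) (A4e2 C) n \/ in2 (A4e1 C + 'i *: A4e3 C) (A4e2 C) n \/
  in2 (A4e1 C - 'i *: A4e3 C) (A4e2 C) n \/ in2 (A4e1 C - A4e2 C) (A4e3 C) n \/
  in2 (A4e1 C) ('i *: A4e2 C + A4e3 C) n \/ in2 (A4e1 C) (- 'i *: A4e2 C + A4e3 C) n.
Proof.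
have e : n = vec (((n 0 i0 - n 0 i1 + 'i * n 0 i2) + (n 0 i0 - n 0 i1 - 'i * n 0 i2)) / 2 + n 0 i1)
   (n 0 i1) (- 'i * ((n 0 i0 - n 0 i1 + 'i * n 0 i2) - (n 0 i0 - n 0 i1 - 'i * n 0 i2)) / 2).
  have h2 := two_neq0 C.
  by rewrite [LHS]vecE; congr vec; field: (sqrCi C).
rewrite e; exact: classify'.
Qed.

Lemma fromin2 (a b n : V) : \dim (span [:: a; b]) = 2%N -> n != 0 -> in2 a b n ->
  Kn n = span [:: a; b].
Proof.
move=> d nz [ha hb]; symmetry; apply: K_eq => //.
by apply/span_subvP => w; rewrite !inE => /orP [] /eqP ->; rewrite memK; apply/eqP.
Qed.

Definition flip (x : V) : V := vec (x 0 i0) (x 0 i1) (- x 0 i2).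

Lemma flipK : cancel flip flip.
Proof. by move=> x; rewrite /flip !mxE /= opprK -vecE. Qed.

Lemma flip_aut : A4aut flip.
Proof.
split.
- by move=> k u v; rewrite /flip vecZ vecD !mxE; congr vec; ring.
- by exists flip; exact: flipK.
- move=> x y; rewrite (vecE x) (vecE y) A4mulE /flip !mxE /= A4mulE; congr vec; ring.
Qed.

Lemma id_aut : A4aut (@id V).
Proof. by split => //; exists id. Qed.

Lemma equiv_id (U : {vspace V}) : A4equiv U U.
Proof.
exists id; split; first exact: id_aut.
by move=> v; split => [hv|[u hu <-] //]; exists v.
Qed.

Lemma equiv_flip (n m : V) : (forall x, dot (flip x) m = dot x n) -> A4equiv (Kn n) (Kn m).
Proof.
move=> h; exists flip; split; first exact: flip_aut.
move=> v; split => [hv|[u hu <-]].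
  exists (flip v); last exact: flipK.
  by rewrite memK -h flipK; rewrite memK in hv.
by rewrite memK h -memK.
Qed.
End Sec6.

Unset Implicit Arguments.
Ltac nz := apply: vec_neq0; rewrite ?(oppr_eq0, oner_eq0, neq0Ci, orbT).

Theorem mainTheorem11 (C : numClosedFieldType) :
  (forall U : {vspace 'rV[C]_3},
     (A4subalg U /\ \dim U = 2%N) <->
     (U = (span [:: A4e1 C; A4e2 C]) \/
      U = (span [:: A4e1 C + 'i *: A4e3 C; A4e2 C]) \/
      U = (span [:: A4e1 C - 'i *: A4e3 C; A4e2 C]) \/
      U = (span [:: A4e1 C - A4e2 C; A4e3 C]) \/
      U = (span [:: A4e1 C; 'i *: A4e2 C + A4e3 C]) \/
      U = (span [:: A4e1 C; - 'i *: A4e2 C + A4e3 C])))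
  /\
  (forall U : {vspace 'rV[C]_3}, A4subalg U -> \dim U = 2%N ->
     [\/ A4equiv U (span [:: A4e1 C; A4e2 C]),
         A4equiv U (span [:: A4e1 C + 'i *: A4e3 C; A4e2 C]),
         A4equiv U (span [:: A4e1 C - A4e2 C; A4e3 C])
       | A4equiv U (span [:: A4e1 C; 'i *: A4e2 C + A4e3 C])]).
Proof.
have n1 : (vec 0 0 1 : 'rV[C]_3) != 0 by nz.
have n2 : (vec 1 0 'i : 'rV[C]_3) != 0 by nz.
have n3 : (vec 1 0 (-'i) : 'rV[C]_3) != 0 by nz.
have n4 : (vec 1 1 0 : 'rV[C]_3) != 0 by nz.
have n5 : (vec 0 1 (-'i) : 'rV[C]_3) != 0 by nz.
have n6 : (vec 0 1 'i : 'rV[C]_3) != 0 by nz.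
have P1 : forall U : {vspace 'rV[C]_3},
     (A4subalg U /\ \dim U = 2%N) <->
     (U = (span [:: A4e1 C; A4e2 C]) \/
      U = (span [:: A4e1 C + 'i *: A4e3 C; A4e2 C]) \/
      U = (span [:: A4e1 C - 'i *: A4e3 C; A4e2 C]) \/
      U = (span [:: A4e1 C - A4e2 C; A4e3 C]) \/
      U = (span [:: A4e1 C; 'i *: A4e2 C + A4e3 C]) \/
      U = (span [:: A4e1 C; - 'i *: A4e2 C + A4e3 C])).
  move=> U; split.
    case=> hs dU; have [n [nz hU]] := normal_exists dU.
    have cl : mulclosed n.
      move=> x y hx hy; apply/eqP; rewrite -memK -hU; apply: hs; rewrite hU memK; exact/eqP.
    rewrite hU.
    case: (classify cl) => [h|[h|[h|[h|[h|h]]]]]; [left|right;left|do 2 right; left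
      |do 3 right; left|do 4 right; left|do 5 right]; apply: fromin2 => //.
    + by rewrite S1E dimK.
    + by rewrite S2E dimK.
    + by rewrite S3E dimK.
    + by rewrite S4E dimK.
    + by rewrite S5E dimK.
    + by rewrite S6E dimK.
  case=> [->|[->|[->|[->|[->|->]]]]].
  + by rewrite S1E dimK //; split => //; exact: sub1.
  + by rewrite S2E dimK //; split => //; exact: sub2.
  + by rewrite S3E dimK //; split => //; exact: sub3.
  + by rewrite S4E dimK //; split => //; exact: sub4.
  + by rewrite S5E dimK //; split => //; exact: sub5.
  + by rewrite S6E dimK //; split => //; exact: sub6.
split; first exact: P1.
move=> U hs dU.
case: (proj1 (P1 U) (conj hs dU)) => [->|[->|[->|[->|[->|->]]]]].
- by apply: Or41; exact: equiv_id.
- by apply: Or42; exact: equiv_id.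
- apply: Or42; rewrite S3E S2E; apply: equiv_flip => x.
  by rewrite /dot /flip !mxE /=; ring.
- by apply: Or43; exact: equiv_id.
- by apply: Or44; exact: equiv_id.
- apply: Or44; rewrite S6E S5E; apply: equiv_flip => x.
  by rewrite /dot /flip !mxE /=; ring.
Qed.
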